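(* Let $G$ be a finite simple graph without isolated vertices. Then Dom has a winning strategy in the Bicolored Domination Game on $G$, both when Dom makes the first move and when Sepy makes the first move.
   Context: For a vertex $v$ of a graph $G$, $N[v]$ denotes its closed neighborhood. The Bicolored Domination Game on an isolate-free graph $G$ is played by two players, Dom and Sepy, who alternately color vertices; Dom may only use the color $p$ (purple) and Sepy may only use the color $b$ (blue). At any stage $V_p$ and $V_b$ denote the sets of vertices colored $p$ and $b$. A player whose color is $c$ makes a move by choosing a vertex $v$ such that (i) $v$ is not yet colored, and (ii) there exists $u\in N[v]$ with $N[u]\cap V_c=\emptyset$ (evaluated before the move); then $v$ receives color $c$. The game terminates as soon as one of the following holds: (s* ) some vertex $v$ has $N[v]\subseteq V_p$ or $N[v]\subseteq V_b$ — then Sepy wins; (d** ) for some color $c\in\{p,b\}$, $V_c$ dominates all vertices of $G$ and no vertex $v$ satisfies $N[v]\subseteq V_c$ — then Dom wins. *)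

(* Defs.v *)
From mathcomp Require Import all_boot.
Set Implicit Arguments.
Unset Strict Implicit.
Unset Printing Implicit Defensive.

(* A finite simple graph: vertex set T (a finType), adjacency e : rel T
   (symmetry / irreflexivity are hypotheses of the theorem).
   Colors: true = p (purple, Dom), false = b (blue, Sepy). *)

Section BicoloredGame.
Variables (T : finType) (e : rel T).

Definition cnbhd (v : T) : {set T} := [set u | (u == v) || e v u].

Definition colset (c : bool) (Vp Vb : {set T}) : {set T} :=
  if c then Vp else Vb.

Definition dominates (V : {set T}) : bool :=
  [forall u, cnbhd u :&: V != set0].

Definition sepy_cond (Vp Vb : {set T}) : bool :=
  [exists v, (cnbhd v \subset Vp) || (cnbhd v \subset Vb)].

Definition dom_cond_col (V : {set T}) : bool :=
  dominates V && [forall v, ~~ (cnbhd v \subset V)].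

Definition dom_cond (Vp Vb : {set T}) : bool :=
  dom_cond_col Vp || dom_cond_col Vb.

Definition terminal (Vp Vb : {set T}) : bool :=
  sepy_cond Vp Vb || dom_cond Vp Vb.

Definition dom_won (Vp Vb : {set T}) : bool :=
  ~~ sepy_cond Vp Vb && dom_cond Vp Vb.

Definition legal (c : bool) (Vp Vb : {set T}) (v : T) : bool :=
  [&& v \notin Vp, v \notin Vb &
      [exists u in cnbhd v, cnbhd u :&: colset c Vp Vb == set0]].

(* DomWins t Vp Vb : from position (Vp, Vb) with Dom to move iff t = true,
   Dom has a winning strategy.  Since every move colors a new vertex,
   the game is finite and this inductive predicate expresses exactly the
   existence of a winning strategy for Dom. *)
Inductive DomWins : bool -> {set T} -> {set T} -> Prop :=
| DW_end t Vp Vb :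
    dom_won Vp Vb -> DomWins t Vp Vb
| DW_dom Vp Vb v :
    ~~ terminal Vp Vb -> legal true Vp Vb v ->
    DomWins false (v |: Vp) Vb -> DomWins true Vp Vb
| DW_sepy Vp Vb :
    ~~ terminal Vp Vb ->
    (exists v, legal false Vp Vb v) ->
    (forall v, legal false Vp Vb v -> DomWins true Vp (v |: Vb)) ->
    DomWins false Vp Vb.

End BicoloredGame.

(* Main.v *)
Require Import Defs.
From mathcomp Require Import all_boot.
Set Implicit Arguments.
Unset Strict Implicit.
Unset Printing Implicit Defensive.

Section Game.
Variables (T : finType) (e : rel T).
Hypotheses (e_sym : symmetric e) (e_irr : irreflexive e)
  (no_iso : forall v : T, exists u : T, e v u).

Local Notation N := (cnbhd e).
Implicit Types (P B : {set T}).

Lemma inN u v : (u \in N v) = (u == v) || e v u.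
Proof. by rewrite inE. Qed.
Lemma selfN v : v \in N v.
Proof. by rewrite inN eqxx. Qed.
Lemma adjN v u : e v u -> u \in N v.
Proof. by move=> H; rewrite inN H orbT. Qed.
Lemma symN u v : (u \in N v) = (v \in N u).
Proof. by rewrite !inN eq_sym e_sym. Qed.

Definition undom (P : {set T}) u := N u :&: P == set0.
Lemma undom_notin P u : undom P u -> u \notin P.
Proof. by move=> /eqP/setP/(_ u); rewrite !inE eqxx /= => ->. Qed.
Lemma undom_nadj P u p : undom P u -> p \in P -> e u p = false.
Proof. by move=> /eqP/setP/(_ p); rewrite !inE => H Hp; move: H; rewrite Hp andbT => /norP [_ /negbTE]. Qed.
Lemma undomI P u : u \notin P -> (forall p, p \in P -> e u p = false) -> undom P u.
Proof.
move=> Hu H; apply/eqP/setP => p; rewrite !inE.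
case: (eqVneq p u) => [->|pu] /=; first by rewrite (negbTE Hu).
by case Hp: (p \in P); rewrite ?andbF ?andbT // H.
Qed.

Lemma legal_dom P B x u : x \notin P -> x \notin B -> u \in N x -> undom P u ->
  legal e true P B x.
Proof. by move=> H1 H2 H3 H4; rewrite /legal H1 H2 /=; apply/existsP; exists u; rewrite H3. Qed.

Lemma legal_sepyE P B w : legal e false P B w ->
  [/\ w \notin P, w \notin B & exists2 u, u \in N w & undom B u].
Proof. by move=> /and3P [H1 H2 /existsP [u /andP [H3 H4]]]; split => //; exists u. Qed.

Lemma legal_sepyI P B w u : w \notin P -> w \notin B -> u \in N w -> undom B u ->
  legal e false P B w.
Proof. by move=> H1 H2 H3 H4; rewrite /legal H1 H2 /=; apply/existsP; exists u; rewrite H3. Qed.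

Lemma term_won P B : ~~ sepy_cond e P B -> terminal e P B -> dom_won e P B.
Proof. move=> Hs /orP [H|H]; first by rewrite H in Hs. by rewrite /dom_won Hs H. Qed.

Lemma nonterm P B : ~~ terminal e P B ->
  [/\ ~~ sepy_cond e P B, exists u, undom P u & exists u, undom B u].
Proof.
rewrite /terminal negb_or => /andP [Hs Hd]; split => //.
- move: Hd; rewrite /dom_cond negb_or => /andP [Hp _].
  move: Hp; rewrite /dom_cond_col negb_and => /orP [|].
    by rewrite /dominates negb_forall => /existsP [u]; rewrite negbK => H; exists u.
  rewrite negb_forall => /existsP [v]; rewrite negbK => Hv.
  by move: Hs; rewrite /sepy_cond; case/existsP; exists v; rewrite Hv.
- move: Hd; rewrite /dom_cond negb_or => /andP [_ Hp].
  move: Hp; rewrite /dom_cond_col negb_and => /orP [|].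
    by rewrite /dominates negb_forall => /existsP [u]; rewrite negbK => H; exists u.
  rewrite negb_forall => /existsP [v]; rewrite negbK => Hv.
  by move: Hs; rewrite /sepy_cond; case/existsP; exists v; rewrite Hv orbT.
Qed.

Definition invol (f : {ffun T -> T}) :=
  [forall x, f (f x) == x] && [forall x, (f x != x) ==> e x (f x)].
Definition msize (f : {ffun T -> T}) := #|[set x | f x != x]|.
Definition fid : {ffun T -> T} := [ffun x => x].
Lemma invol_fid : invol fid.
Proof. by apply/andP; split; apply/forallP => x; rewrite !ffunE ?eqxx. Qed.
Definition mt := [arg max_(f > fid | invol f) msize f].
Lemma mt_spec : invol mt /\ forall g, invol g -> msize g <= msize mt.
Proof. rewrite /mt; case: arg_maxnP; first exact: invol_fid.
by move=> f Hf Hmax; split => // g /Hmax. Qed.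
Lemma mtK x : mt (mt x) = x.
Proof. by case: mt_spec => /andP [/forallP H _] _; apply/eqP. Qed.
Lemma mt_e x : mt x != x -> e x (mt x).
Proof. by case: mt_spec => /andP [_ /forallP H] _; move: (H x) => /implyP. Qed.

Lemma bigger (g : {ffun T -> T}) : invol g -> (forall x, mt x != x -> g x != x) ->
  forall y, mt y = y -> g y != y -> False.
Proof.
move=> Hg Hsub y Hy Hgy.
case: mt_spec => _ /(_ g Hg).
have : [set x | mt x != x] \proper [set x | g x != x].
  apply/properP; split.
    by apply/subsetP => x; rewrite !inE; apply: Hsub.
  by exists y; rewrite !inE ?Hgy // Hy eqxx.
by move/proper_card; rewrite /msize => H1 H2; move: (leq_trans H1 H2); rewrite ltnn.
Qed.

Lemma maximal a b : mt a = a -> mt b = b -> e a b -> False.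
Proof.
move=> Ha Hb Hab.
have Hne : a != b by apply/eqP => E; move: Hab; rewrite E e_irr.
pose g := [ffun x => if x == a then b else if x == b then a else mt x].
apply: (@bigger g _ _ a Ha).
- have Hne' : b != a by rewrite eq_sym.
  have ga : g a = b by rewrite ffunE eqxx.
  have gb : g b = a by rewrite ffunE eqxx (negbTE Hne').
  have gx x : x != a -> x != b -> g x = mt x.
    by move=> h1 h2; rewrite ffunE (negbTE h1) (negbTE h2).
  apply/andP; split; apply/forallP => x.
  + case: (eqVneq x a) => [->|xa]; first by rewrite ga gb.
    case: (eqVneq x b) => [->|xb]; first by rewrite gb ga.
    have h1 : mt x != a by apply/eqP => E; move/eqP: xa; apply; rewrite -(mtK x) E Ha.
    have h2 : mt x != b by apply/eqP => E; move/eqP: xb; apply; rewrite -(mtK x) E Hb.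
    by rewrite (gx x xa xb) (gx _ h1 h2) mtK.
  + case: (eqVneq x a) => [->|xa]; first by rewrite ga Hab implybT.
    case: (eqVneq x b) => [->|xb]; first by rewrite gb e_sym Hab implybT.
    by rewrite (gx x xa xb); apply/implyP; apply: mt_e.
- move=> x Hx; rewrite ffunE.
  case: (eqVneq x a) => [E|xa]; first by move: Hx; rewrite E Ha eqxx.
  case: (eqVneq x b) => [E|xb]; first by move: Hx; rewrite E Hb eqxx.
  exact: Hx.
- by rewrite ffunE eqxx eq_sym.
Qed.

Lemma aug3 a z z' : mt a != a -> mt z = z -> mt z' = z' -> e z a -> e z' (mt a) ->
  z != z' -> False.
Proof.
move=> Ha Hz Hz' Hza Hzb Hzz.
set b := mt a in Ha Hzb.
have Hb : mt b = a by rewrite /b mtK.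
have ab : a != b by rewrite eq_sym.
have ba : b != a by [].
have za : z != a by apply/eqP => E; move: Ha; rewrite /b -E Hz eqxx.
have zb : z != b by apply/eqP => E; move: ab; rewrite -Hb -E Hz eqxx.
have z'a : z' != a by apply/eqP => E; move: Ha; rewrite /b -E Hz' eqxx.
have z'b : z' != b by apply/eqP => E; move: ab; rewrite -Hb -E Hz' eqxx.
pose g := [ffun x => if x == z then a else if x == a then z else if x == b then z'
                     else if x == z' then b else mt x].
have gz : g z = a by rewrite ffunE eqxx.
have ga : g a = z by rewrite ffunE eqxx eq_sym (negbTE za).
have gb : g b = z' by rewrite ffunE eqxx eq_sym (negbTE zb) (negbTE ba).
have gz' : g z' = b by rewrite ffunE eqxx (negbTE z'a) (negbTE z'b) eq_sym (negbTE Hzz).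
have gx x : x != z -> x != a -> x != b -> x != z' -> g x = mt x.
  by move=> h1 h2 h3 h4; rewrite ffunE (negbTE h1) (negbTE h2) (negbTE h3) (negbTE h4).
have mx x : x != z -> x != a -> x != b -> x != z' ->
   [/\ mt x != z, mt x != a, mt x != b & mt x != z'].
  move=> h1 h2 h3 h4; split; apply/eqP => E.
  - by move/eqP: h1; apply; rewrite -(mtK x) E Hz.
  - by move/eqP: h3; apply; rewrite -(mtK x) E.
  - by move/eqP: h2; apply; rewrite -(mtK x) E Hb.
  - by move/eqP: h4; apply; rewrite -(mtK x) E Hz'.
apply: (@bigger g _ _ z Hz); last by rewrite gz eq_sym.
- apply/andP; split; apply/forallP => x.
  + case: (eqVneq x z) => [->|h1]; first by rewrite gz ga.
    case: (eqVneq x a) => [->|h2]; first by rewrite ga gz.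
    case: (eqVneq x b) => [->|h3]; first by rewrite gb gz'.
    case: (eqVneq x z') => [->|h4]; first by rewrite gz' gb.
    case: (mx x h1 h2 h3 h4) => m1 m2 m3 m4.
    by rewrite (gx x h1 h2 h3 h4) (gx _ m1 m2 m3 m4) mtK.
  + case: (eqVneq x z) => [->|h1]; first by rewrite gz Hza implybT.
    case: (eqVneq x a) => [->|h2]; first by rewrite ga e_sym Hza implybT.
    case: (eqVneq x b) => [->|h3]; first by rewrite gb e_sym Hzb implybT.
    case: (eqVneq x z') => [->|h4]; first by rewrite gz' Hzb implybT.
    by rewrite (gx x h1 h2 h3 h4); apply/implyP; apply: mt_e.
- move=> x Hx.
  case: (eqVneq x z) => [E|h1]; first by move: Hx; rewrite E Hz eqxx.
  case: (eqVneq x a) => [->|h2]; first by rewrite ga.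
  case: (eqVneq x b) => [->|h3]; first by rewrite gb.
  case: (eqVneq x z') => [E|h4]; first by move: Hx; rewrite E Hz' eqxx.
  by rewrite (gx x h1 h2 h3 h4).
Qed.

Lemma orient a : mt a != a ->
  (forall z, mt z = z -> e (mt a) z -> e a z) \/
  (forall z, mt z = z -> e a z -> e (mt a) z).
Proof.
move=> Ha.
case: (boolP [forall z, (mt z == z) ==> e (mt a) z ==> e a z]) => [/forallP H|].
  by left => z Hz Hb; move: (H z); rewrite Hz eqxx Hb.
rewrite negb_forall => /existsP [z1]; rewrite !negb_imply => /and3P [/eqP Hz1 Hb1 Ha1].
right => z Hz Haz; apply/negPn/negP => Hbz.
apply: (@aug3 a z z1 Ha Hz Hz1); first by rewrite e_sym.
  by rewrite e_sym.
by apply/eqP => E; move: Ha1; rewrite -E Haz.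
Qed.

Lemma undom_in P u v : undom P u -> v \in N u -> v \notin P.
Proof. move=> /eqP/setP/(_ v); rewrite !inE => H Hv; by move: H; rewrite Hv /= => ->. Qed.

Definition Res (P : {set T}) p q :=
  mt q = q \/ (mt p = q /\ forall z, mt z = z -> z \notin P -> e q z -> e p z).

Definition INV P B := [/\ (forall x, x \in P -> x \notin B),
  (forall b, b \in B -> exists2 p, p \in P & e b p),
  (forall p, p \in P -> (exists2 b, b \in B & e p b) \/
      (exists q, [/\ e p q, q \notin P, q \notin B & Res P p q])) &
  (forall a, a \in B -> mt a != a -> mt a \notin P -> mt a \notin B ->
      exists2 p, p \in P & e (mt a) p)].

Lemma Res_mono P P' p q : P \subset P' -> Res P p q -> Res P' p q.
Proof.
move=> sub [H|[H1 H2]]; [by left | right; split => // z Hz HzP].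
apply: H2 => //; apply/negP => H; move/negP: HzP; apply; exact: (subsetP sub).
Qed.

Lemma no_sepy P B : INV P B -> ~~ sepy_cond e P B.
Proof.
case=> D I1 I2 I3; apply/existsP => [[v /orP [H|H]]].
- have Hv : v \in P := subsetP H v (selfN v).
  case: (I2 v Hv) => [[b Hb Hvb]|[q [Hvq HqP _ _]]].
    by move: (D b (subsetP H b (adjN Hvb))); rewrite Hb.
  by move: (subsetP H q (adjN Hvq)); rewrite (negbTE HqP).
- have Hv : v \in B := subsetP H v (selfN v).
  case: (I1 v Hv) => p Hp Hvp.
  by move: (D p Hp); rewrite (subsetP H p (adjN Hvp)).
Qed.

Lemma no_sepy_after P B w : INV P B -> legal e false P B w -> ~~ sepy_cond e P (w |: B).
Proof.
case=> D I1 I2 I3 /legal_sepyE [wP wB [u Hu HuB]].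
apply/existsP => [[v /orP [H|H]]].
- have Hv : v \in P := subsetP H v (selfN v).
  case: (I2 v Hv) => [[b Hb Hvb]|[q [Hvq HqP _ _]]].
    by move: (D b (subsetP H b (adjN Hvb))); rewrite Hb.
  by move: (subsetP H q (adjN Hvq)); rewrite (negbTE HqP).
- have Hv : v \in w |: B := subsetP H v (selfN v).
  move: Hv; rewrite in_setU1 => /orP [/eqP Evw|Hv].
  + subst v.
    have Huw : u == w.
      move: (subsetP H u Hu); rewrite in_setU1 => /orP [//|HuB'].
      by move: (undom_in HuB (selfN u)); rewrite HuB'.
    move/eqP: Huw => Huw; subst u.
    case: (no_iso w) => y Hwy.
    have : y \in w |: B := subsetP H y (adjN Hwy).
    rewrite in_setU1 => /orP [/eqP Ey|Hy].
      by move: Hwy; rewrite Ey e_irr.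
    by move: (undom_in HuB (adjN Hwy)); rewrite Hy.
  + case: (I1 v Hv) => p Hp Hvp.
    move: (subsetP H p (adjN Hvp)); rewrite in_setU1 => /orP [/eqP Ep|HpB].
      by move: wP; rewrite -Ep Hp.
    by move: (D p Hp); rewrite HpB.
Qed.

Lemma sepy_exists P B : ~~ terminal e P B -> exists w, legal e false P B w.
Proof.
move=> Hnt; case: (nonterm Hnt) => Hs _ [u Hu].
move/existsPn: Hs => /(_ u); rewrite negb_or => /andP [H _].
case/subsetPn: H => v Hv vP.
exists v; apply: (legal_sepyI vP (undom_in Hu Hv) _ Hu).
by rewrite symN.
Qed.

Lemma step P B B' x :
  INV P B -> B \subset B' -> x \notin P -> x \notin B' ->
  (forall b, b \in B' -> b \notin (x |: P)) ->
  (forall b, b \in B' -> exists2 p, p \in x |: P & e b p) ->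
  ((exists2 b, b \in B' & e x b) \/
     (exists q, [/\ e x q, q \notin x |: P, q \notin B' & Res (x |: P) x q])) ->
  (forall p, p \in P -> e p x -> Res P p x -> False) ->
  (forall a, a \in B' -> mt a != a -> mt a \notin x |: P -> mt a \notin B' ->
      exists2 p, p \in x |: P & e (mt a) p) ->
  INV (x |: P) B'.
Proof.
case=> D I1 I2 I3 sub xP xB D' I1' Wx NR I3'.
split => // [b Hb|p]; first by apply/negP => H; move: (D' b H); rewrite Hb.
rewrite in_setU1 => /orP [/eqP -> //|Hp].
case: (I2 p Hp) => [[b Hb Hpb]|[q [Hpq HqP HqB Hr]]].
  by left; exists b => //; exact: (subsetP sub).
case HqB': (q \in B'); first by left; exists q.
right; exists q; split => //.
- rewrite in_setU1 negb_or HqP andbT; apply/eqP => E.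
  by apply: (NR p Hp); rewrite -E.
- by rewrite HqB'.
- apply: (Res_mono _ Hr); exact: subsetUr.
Qed.

Lemma free_move P B u : INV P B -> undom P u ->
  exists x, legal e true P B x /\ INV (x |: P) B.
Proof.
move=> Hinv Hu; have Hinv' := Hinv; case: Hinv' => D I1 I2 I3.
have uP := undom_notin Hu.
have uB : u \notin B.
  by apply/negP => Hb; case: (I1 u Hb) => p Hp Hup; rewrite (undom_nadj Hu Hp) in Hup.
have fin x : x \notin P -> x \notin B -> legal e true P B x ->
  ((exists2 b, b \in B & e x b) \/
     (exists q, [/\ e x q, q \notin x |: P, q \notin B & Res (x |: P) x q])) ->
  (forall p, p \in P -> e p x -> Res P p x -> False) ->
  exists x, legal e true P B x /\ INV (x |: P) B.
  move=> xP xB Hl Wx NR; exists x; split => //.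
  apply: (step Hinv (subxx _) xP xB) => //.
  - move=> b Hb; rewrite in_setU1 negb_or; apply/andP; split.
      by apply/eqP => E; move: xB; rewrite -E Hb.
    by apply/negP => H; move: (D b H); rewrite Hb.
  - by move=> b Hb; case: (I1 b Hb) => p Hp Hbp; exists p => //; rewrite in_setU1 Hp orbT.
  - move=> a Ha Hm; rewrite in_setU1 negb_or => /andP [_ H1] H2.
    by case: (I3 a Ha Hm H1 H2) => p Hp Hap; exists p => //; rewrite in_setU1 Hp orbT.
have nadj p : p \in P -> e p u -> False.
  by move=> Hp Hpu; move: (undom_nadj Hu Hp); rewrite e_sym Hpu.
case: (boolP [exists b in B, e u b]) => [/exists_inP [b Hb Hub]| Hnb].
  apply: (fin u uP uB (legal_dom uP uB (selfN u) Hu)); first by left; exists b.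
  by move=> p Hp Hpu _; apply: (nadj p Hp Hpu).
have nB y : e u y -> y \notin B.
  by move=> Huy; apply/negP => Hy; move/negP: Hnb; apply; apply/exists_inP; exists y.
have nP y : e u y -> y \notin P.
  by move=> Huy; apply/negP => Hy; rewrite (undom_nadj Hu Hy) in Huy.
case: (eqVneq (mt u) u) => Hm.
- case: (no_iso u) => y Huy.
  have yP := nP y Huy; have yB := nB y Huy.
  have uy : u != y by apply/eqP => E; move: Huy; rewrite E e_irr.
  apply: (fin y yP yB (legal_dom yP yB _ Hu)).
  + by apply: adjN; rewrite e_sym.
  + right; exists u; split => //; first by rewrite e_sym.
      by rewrite in_setU1 negb_or uP andbT.
    by left.
  + move=> p Hp Hpy [Hy|[Hpm Hc]]; first by apply: (maximal Hm Hy Huy).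
    by apply: (nadj p Hp); apply: Hc => //; rewrite e_sym.
- set u' := mt u in Hm.
  have Huu' : e u u' := mt_e Hm.
  have u'P := nP u' Huu'; have u'B := nB u' Huu'.
  case: (orient Hm) => Ho.
  + apply: (fin u uP uB (legal_dom uP uB (selfN u) Hu)).
      right; exists u'; split => //; first by rewrite in_setU1 negb_or Hm u'P.
      by right; split => // z Hz _ H; apply: Ho.
    by move=> p Hp Hpu _; apply: (nadj p Hp Hpu).
  + apply: (fin u' u'P u'B (legal_dom u'P u'B _ Hu)).
    * by apply: adjN; rewrite e_sym.
    * right; exists u; split => //; first by rewrite e_sym.
        by rewrite in_setU1 negb_or eq_sym Hm uP.
      by right; split; [rewrite /u' mtK | move=> z Hz _ H; apply: Ho].
    * move=> p Hp Hpu' [Hy|[Hpm _]].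
        by move: Hm; rewrite -Hy /u' mtK eqxx.
      have Epu : p = u by rewrite -(mtK p) Hpm /u' mtK.
      by move: uP; rewrite -Epu Hp.
Qed.

Lemma response P B w : INV P B -> legal e false P B w -> ~~ terminal e P (w |: B) ->
  exists x, legal e true P (w |: B) x /\ INV (x |: P) (w |: B).
Proof.
move=> Hinv Hl Hnt; have Hinv' := Hinv; case: Hinv' => D I1 I2 I3.
case/legal_sepyE: (Hl) => wP wB [u0 Hu0 Hu0B].
have fin x : x \notin P -> x \notin w |: B -> legal e true P (w |: B) x ->
  (exists2 p, p \in x |: P & e w p) ->
  ((exists2 b, b \in w |: B & e x b) \/
     (exists q, [/\ e x q, q \notin x |: P, q \notin w |: B & Res (x |: P) x q])) ->
  (forall p, p \in P -> e p x -> Res P p x -> False) ->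
  (mt w != w -> mt w \notin x |: P -> mt w \notin w |: B ->
      exists2 p, p \in x |: P & e (mt w) p) ->
  exists x, legal e true P (w |: B) x /\ INV (x |: P) (w |: B).
  move=> xP xB Hl' I1w Wx NR I3w; exists x; split => //.
  have xw : x != w by apply/eqP => E; move: xB; rewrite E setU11.
  apply: (step Hinv (subsetUr _ _) xP xB) => //.
  - move=> b; rewrite in_setU1 => /orP [/eqP ->|Hb].
      by rewrite in_setU1 negb_or eq_sym xw wP.
    rewrite in_setU1 negb_or; apply/andP; split.
      by apply/eqP => E; move: xB; rewrite -E in_setU1 Hb orbT.
    by apply/negP => H; move: (D b H); rewrite Hb.
  - move=> b; rewrite in_setU1 => /orP [/eqP -> //|Hb].
    by case: (I1 b Hb) => p Hp Hbp; exists p => //; rewrite in_setU1 Hp orbT.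
  - move=> a; rewrite in_setU1 => /orP [/eqP -> //|Ha] Hm.
    rewrite !in_setU1 !negb_or => /andP [_ H1] /andP [_ H2].
    by case: (I3 a Ha Hm H1 H2) => p Hp Hap; exists p => //; rewrite in_setU1 Hp orbT.
case: (boolP [exists p in P, e w p]) => [/exists_inP [p0 Hp0 Hwp0]|Hnp].
- case: (boolP [&& mt w != w, mt w \notin P, mt w \notin B &
                   ~~ [exists p in P, e (mt w) p]]) => [/and4P [Hm H1 H2 H3]|HnA].
  + have Hw' : undom P (mt w).
      apply: (undomI H1) => p Hp; apply/negbTE/negP => H.
      by move/negP: H3; apply; apply/exists_inP; exists p.
    have xB : mt w \notin w |: B by rewrite in_setU1 negb_or Hm H2.
    apply: (fin (mt w) H1 xB (legal_dom H1 xB (selfN _) Hw')).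
    * by exists p0 => //; rewrite in_setU1 Hp0 orbT.
    * by left; exists w; rewrite ?setU11 // e_sym mt_e.
    * move=> p Hp _ [Hy|[Hpm _]]; first by move: Hm; rewrite -{1}Hy mtK eqxx.
      have Epw : p = w by rewrite -(mtK p) Hpm mtK.
      by move: wP; rewrite -Epw Hp.
    * by move=> _; rewrite setU11.
  + have HinvB : INV P (w |: B).
      split.
      * move=> x Hx; rewrite in_setU1 negb_or (D x Hx) andbT.
        by apply/eqP => E; move: wP; rewrite -E Hx.
      * move=> b; rewrite in_setU1 => /orP [/eqP ->|Hb]; first by exists p0.
        exact: I1.
      * move=> p Hp; case: (I2 p Hp) => [[b Hb Hpb]|[q [Hpq HqP HqB Hr]]].
          by left; exists b => //; rewrite in_setU1 Hb orbT.
        case: (eqVneq q w) => [Eq|qw].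
          by left; exists w; rewrite ?setU11 // -Eq.
        by right; exists q; split => //; rewrite in_setU1 negb_or qw.
      * move=> a; rewrite in_setU1 => /orP [/eqP ->|Ha] Hm H1.
          rewrite in_setU1 negb_or => /andP [_ H2].
          by move: HnA; rewrite Hm H1 H2 /= negbK => /exists_inP [p Hp Hwp]; exists p.
        rewrite in_setU1 negb_or => /andP [_ H2].
        exact: I3.
    case: (nonterm Hnt) => _ [u Hu] _.
    exact: (free_move HinvB Hu).
- have Hw : undom P w.
    apply: (undomI wP) => p Hp; apply/negbTE/negP => H.
    by move/negP: Hnp; apply; apply/exists_inP; exists p.
  case: (eqVneq (mt w) w) => Hm.
  + case: (boolP [exists y, [&& e w y, y \notin P & y \notin B]]) =>
       [/existsP [y /and3P [Hwy yP yB]]|Hne].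
    * have yw : y != w by apply/eqP => E; move: Hwy; rewrite E e_irr.
      have xB : y \notin w |: B by rewrite in_setU1 negb_or yw yB.
      apply: (fin y yP xB (legal_dom yP xB _ Hw)).
      -- by apply: adjN; rewrite e_sym.
      -- by exists y; rewrite ?setU11.
      -- by left; exists w; rewrite ?setU11 // e_sym.
      -- move=> p Hp Hpy [Hy|[Hpm Hc]]; first by apply: (maximal Hm Hy Hwy).
         have Hpw : e p w by apply: Hc => //; rewrite e_sym.
         by move: (undom_nadj Hw Hp); rewrite e_sym Hpw.
      -- by rewrite Hm eqxx.
    * exfalso.
      have nb y : e w y -> y \in B.
        move=> Hwy; apply/negPn/negP => Hy.
        move/negP: Hne; apply; apply/existsP; exists y.
        rewrite Hwy Hy andbT /=; apply/negP => H.
        by rewrite (undom_nadj Hw H) in Hwy.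
      move: Hu0; rewrite inN => /orP [/eqP Eu|Hwu].
      -- subst u0; case: (no_iso w) => y Hwy.
         by move: (undom_in Hu0B (adjN Hwy)); rewrite (nb y Hwy).
      -- by move: (undom_in Hu0B (selfN u0)); rewrite (nb u0 Hwu).
  + have Hww : e w (mt w) := mt_e Hm.
    have w'P : mt w \notin P.
      by apply/negP => H; rewrite (undom_nadj Hw H) in Hww.
    have w'B : mt w \notin B.
      apply/negP => Hb.
      have Hm' : mt (mt w) != mt w by rewrite mtK eq_sym.
      case: (I3 _ Hb Hm'); rewrite ?mtK // => p Hp Hwp.
      by rewrite (undom_nadj Hw Hp) in Hwp.
    have xB : mt w \notin w |: B by rewrite in_setU1 negb_or Hm w'B.
    apply: (fin (mt w) w'P xB (legal_dom w'P xB _ Hw)).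
    * by apply: adjN; rewrite e_sym.
    * by exists (mt w); rewrite ?setU11.
    * by left; exists w; rewrite ?setU11 // e_sym.
    * move=> p Hp _ [Hy|[Hpm _]]; first by move: Hm; rewrite -{1}Hy mtK eqxx.
      have Epw : p = w by rewrite -(mtK p) Hpm mtK.
      by move: wP; rewrite -Epw Hp.
    * by move=> _; rewrite setU11.
Qed.

Lemma main_step P B : INV P B ->
  (forall P' B', #|~: (P' :|: B')| < #|~: (P :|: B)| -> INV P' B' -> DomWins e false P' B') ->
  DomWins e false P B.
Proof.
move=> Hinv IH.
case Hw: (dom_won e P B); first by apply: DW_end; rewrite Hw.
have Hnt : ~~ terminal e P B.
  by apply/negP => Ht; move: Hw; rewrite (term_won (no_sepy Hinv) Ht).
apply: DW_sepy => //; first exact: sepy_exists.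
move=> w Hl.
case Hw2: (dom_won e P (w |: B)); first by apply: DW_end; rewrite Hw2.
have Hnt2 : ~~ terminal e P (w |: B).
  by apply/negP => Ht; move: Hw2; rewrite (term_won (no_sepy_after Hinv Hl) Ht).
case: (response Hinv Hl Hnt2) => x [Hx Hinv2].
apply: (DW_dom Hnt2 Hx).
apply: IH Hinv2.
case/legal_sepyE: Hl => wP wB _.
case/and3P: Hx => xP xB _.
apply: proper_card; apply/properP; split.
  apply/subsetP => y; rewrite !inE !negb_or => /andP [/andP [_ H1] /andP [_ H2]].
  by rewrite H1 H2.
exists w; first by rewrite !inE negb_or wP wB.
by rewrite !inE eqxx orbT.
Qed.

Lemma main k P B : #|~: (P :|: B)| <= k -> INV P B -> DomWins e false P B.
Proof.
elim: k P B => [|k IH] P B Hk Hinv; apply: (main_step Hinv) => P' B' Hlt Hinv'.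
  by move: (leq_trans Hlt Hk).
by apply: IH Hinv'; rewrite -ltnS; apply: leq_trans Hlt Hk.
Qed.

Lemma INV0 : INV set0 set0.
Proof. by split => x; rewrite inE. Qed.

Lemma final : DomWins e true set0 set0 /\ DomWins e false set0 set0.
Proof.
have Hf : DomWins e false set0 set0 := main (leqnn _) INV0.
split => //.
case Hw: (dom_won e set0 set0); first by apply: DW_end; rewrite Hw.
have Hnt : ~~ terminal e set0 set0.
  by apply/negP => Ht; move: Hw; rewrite (term_won (no_sepy INV0) Ht).
case: (nonterm Hnt) => _ [u Hu] _.
case: (free_move INV0 Hu) => x [Hx Hinv].
apply: (DW_dom Hnt Hx).
exact: (main (leqnn _) Hinv).
Qed.

End Game.

Theorem theorem12 (T : finType) (e : rel T)
  (e_sym : symmetric e) (e_irr : irreflexive e)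
  (no_isolated : forall v : T, exists u : T, e v u) :
  DomWins e true set0 set0 /\ DomWins e false set0 set0.
Proof.
exact: (final e_sym e_irr no_isolated).
Qed.
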